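(* Let $P^1,\dots,P^m\in\Delta^n$ ($m\ge 2$) be the rows of a channel matrix $\Phi$ and assume they are in general position. For $k=0,1,\dots,m-2$ let $L_k=L(P^{k+1},\dots,P^m)$. Let $Q^0\in L_0$ be the equidistant point from $P^1,\dots,P^m$, and define recursively $Q^k=\pi(Q^{k-1}\,|\,L_k)$ for $k=1,\dots,m-2$. Let $\boldsymbol\lambda^k=(\lambda^k_1,\dots,\lambda^k_m)$ be the barycentric coordinate of $Q^k$ about $P^1,\dots,P^m$. Let $K\in\{0,1,\dots,m-2\}$ and assume: for every $k=0,1,\dots,K-1$, $\lambda^k_i=0$ for $i=1,\dots,k$, $\lambda^k_{k+1}<0$, and $\lambda^k_i>0$ for $i=k+2,\dots,m$; and $\lambda^K_i=0$ for $i=1,\dots,K$ and $\lambda^K_i>0$ for $i=K+1,\dots,m$ (when $K=0$ the assumption is instead $\lambda^0_i\ge 0$ for all $i=1,\dots,m$). Then the output distribution achieving the channel capacity is $Q^\ast=Q^K$, and the channel capacity is $C=D(P^{K+1}\|Q^K)$.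
   Context: $\Delta^n=\{Q=(Q_1,\dots,Q_n): Q_j>0,\ \sum_j Q_j=1\}$ and $\bar\Delta^m=\{\boldsymbol\lambda\in\mathbb{R}^m:\lambda_i\ge0,\sum_i\lambda_i=1\}$. $D(Q\|Q')=\sum_j Q_j\log(Q_j/Q'_j)$ is the Kullback–Leibler divergence. The channel matrix $\Phi$ is the $m\times n$ matrix with rows $P^i=(P^i_1,\dots,P^i_n)$ (conditional output distributions given input $x_i$). The rows are in general position if $P^2-P^1,\dots,P^m-P^1$ are linearly independent. For points $S^1,\dots,S^r\in\Delta^n$, $L(S^1,\dots,S^r)=\{\sum_i\lambda_iS^i:\sum_i\lambda_i=1\}\cap\Delta^n$ (affine subspace). For $Q'\in\Delta^n$ and such an affine subspace $L$, $\pi(Q'|L)$ denotes the unique $Q\in L$ minimizing $D(Q\|Q')$. The barycentric coordinate of $Q\in L(P^1,\dots,P^m)$ about $P^1,\dots,P^m$ is the unique $\boldsymbol\lambda\in\mathbb{R}^m$ with $\sum_i\lambda_i=1$ and $Q=\sum_i\lambda_iP^i$. The equidistant point from $P^1,\dots,P^m$ is the unique $Q^0\in L(P^1,\dots,P^m)$ with $D(P^1\|Q^0)=\dots=D(P^m\|Q^0)$. The mutual information is $I(\boldsymbol\lambda,\Phi)=\sum_{i,j}\lambda_iP^i_j\log(P^i_j/Q_j)$ with $Q=\boldsymbol\lambda\Phi$; the channel capacity is $C=\max_{\boldsymbol\lambda\in\bar\Delta^m}I(\boldsymbol\lambda,\Phi)$, and the capacity-achieving output distribution $Q^\ast$ is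 $\boldsymbol\lambda^\ast\Phi$ for a maximizing $\boldsymbol\lambda^\ast$ (it is unique, and equals the minimizer of $\max_i D(P^i\|Q)$ over output distributions $Q$). *)

(* Defs.v *)
From HB Require Import structures.
From mathcomp Require Import all_boot all_order all_algebra.
From mathcomp Require Import all_classical all_reals exp.
Set Implicit Arguments. Unset Strict Implicit. Unset Printing Implicit Defensive.
Import Order.TTheory GRing.Theory Num.Theory.
Local Open Scope ring_scope.

Section Channel.
Variables (R : realType) (m n : nat).

Definition in_open_simplex (Q : 'rV[R]_n) : Prop :=
  (forall j, 0 < Q ord0 j) /\ \sum_j Q ord0 j = 1.

Definition in_closed_simplex (lam : 'rV[R]_m) : Prop :=
  (forall i, 0 <= lam ord0 i) /\ \sum_i lam ord0 i = 1.

Definition KL (Q Q' : 'rV[R]_n) : R :=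
  \sum_j Q ord0 j * ln (Q ord0 j / Q' ord0 j).

(* Rows in general position: P^2-P^1, ..., P^m-P^1 linearly independent
   (i0 is the index of the first row P^1). *)
Definition general_position (Phi : 'M[R]_(m, n)) : Prop :=
  forall i0 : 'I_m, val i0 = 0%N ->
  forall a : 'I_m -> R,
    \sum_(i | i != i0) a i *: (row i Phi - row i0 Phi) = 0 ->
    forall i, i != i0 -> a i = 0.

Definition affL (Phi : 'M[R]_(m, n)) (A : pred 'I_m) (Q : 'rV[R]_n) : Prop :=
  in_open_simplex Q /\
  exists c : 'I_m -> R, \sum_(i | A i) c i = 1 /\
     Q = \sum_(i | A i) c i *: row i Phi.

Definition is_Iproj (Phi : 'M[R]_(m, n)) (A : pred 'I_m) (Q' Q : 'rV[R]_n) : Prop :=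
  affL Phi A Q /\ forall Q'', affL Phi A Q'' -> KL Q Q' <= KL Q'' Q'.

Definition is_equidistant (Phi : 'M[R]_(m, n)) (Q : 'rV[R]_n) : Prop :=
  affL Phi predT Q /\ forall i i', KL (row i Phi) Q = KL (row i' Phi) Q.

Definition is_barycentric (Phi : 'M[R]_(m, n)) (Q : 'rV[R]_n) (lam : 'rV[R]_m) : Prop :=
  \sum_i lam ord0 i = 1 /\ Q = lam *m Phi.

Definition mutual_info (lam : 'rV[R]_m) (Phi : 'M[R]_(m, n)) : R :=
  let Q := lam *m Phi in
  \sum_i \sum_j lam ord0 i * Phi i j * ln (Phi i j / Q ord0 j).

End Channel.

(* Main.v *)
Require Import Defs.
From HB Require Import structures.
From mathcomp Require Import all_boot all_order all_algebra.
From mathcomp Require Import all_classical all_reals exp.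
From mathcomp Require Import ring lra zify.
Import Order.TTheory GRing.Theory Num.Theory.
Local Open Scope ring_scope.

Section Aux.
Variable R : realType.
Implicit Types a b x : R.

Lemma ln_le_sub1 x : 0 < x -> ln x <= x - 1.
Proof. move=> x0; have := expR_ge1Dx (ln x); rewrite lnK ?posrE //; lra. Qed.

Lemma ln_eq_sub1 x : 0 < x -> ln x = x - 1 -> x = 1.
Proof.
move=> x0 h; apply/eqP; apply/negPn/negP => hx.
have : ln x != 0 by rewrite ln_eq0.
move/expR_gt1Dx; rewrite lnK ?posrE //; lra.
Qed.

Lemma T1 a b : 0 < a -> 0 < b -> a - b <= a * ln (a / b).
Proof.
move=> a0 b0; have h := ln_le_sub1 _ (divr_gt0 b0 a0).
rewrite ln_div ?posrE // in h; rewrite ln_div ?posrE //.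
have e : a * (b / a - 1) = b - a by field; rewrite gt_eqF.
have := ler_wpM2l (ltW a0) h; rewrite e; nra.
Qed.

Lemma T2 a b : 0 < a -> 0 < b -> a * ln (a / b) <= (a - b) ^+ 2 / b + (a - b).
Proof.
move=> a0 b0; have h := ln_le_sub1 _ (divr_gt0 a0 b0).
have e : a * (a / b - 1) = (a - b) ^+ 2 / b + (a - b) by field; rewrite gt_eqF.
by rewrite -e ler_wpM2l // ltW.
Qed.

Lemma T3 a b : 0 < a -> 0 < b -> a * ln (a / b) = a - b -> a = b.
Proof.
move=> a0 b0 h.
have h2 : ln (b / a) = b / a - 1.
  rewrite ln_div ?posrE //; rewrite ln_div ?posrE // in h.
  apply: (mulfI (lt0r_neq0 a0)).
  have e : a * (ln b - ln a) = - (a * (ln a - ln b)) by ring.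
  by rewrite e h; field; rewrite gt_eqF.
by have /divr1_eq := ln_eq_sub1 _ (divr_gt0 b0 a0) h2.
Qed.
End Aux.
Section Aux2.
Variable R : realType.


Lemma KL_ge0 n (A B : 'rV[R]_n) : (forall j, 0 < A ord0 j) -> (forall j, 0 < B ord0 j) ->
  \sum_j A ord0 j = \sum_j B ord0 j -> 0 <= KL A B.
Proof.
move=> hA hB hs; rewrite /KL.
apply: le_trans (_ : \sum_j (A ord0 j - B ord0 j) <= _); first by rewrite sumrB hs subrr.
by apply: ler_sum => j _; apply: T1.
Qed.

Lemma KL_eq0 n (A B : 'rV[R]_n) : (forall j, 0 < A ord0 j) -> (forall j, 0 < B ord0 j) ->
  \sum_j A ord0 j = \sum_j B ord0 j -> KL A B = 0 -> A = B.
Proof.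
move=> hA hB hs h0.
have h : \sum_j (A ord0 j * ln (A ord0 j / B ord0 j) - (A ord0 j - B ord0 j)) = 0.
  by rewrite sumrB -/(KL A B) h0 sumrB hs subrr subr0.
apply/rowP => j.
have hnn : forall i, true -> 0 <= A ord0 i * ln (A ord0 i / B ord0 i) - (A ord0 i - B ord0 i).
  by move=> i _; rewrite subr_ge0; apply: T1.
have := psumr_eq0P hnn h (i:=j) isT.
move/eqP; rewrite subr_eq0 => /eqP; exact: T3.
Qed.

Lemma KL_self n (A : 'rV[R]_n) : (forall j, 0 < A ord0 j) -> KL A A = 0.
Proof.
by move=> hA; rewrite /KL big1 // => j _; rewrite divff ?gt_eqF // ln1 mulr0.
Qed.

Lemma lnsplit (a p q : R) : 0 < a -> 0 < p -> 0 < q ->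
  a * ln (a / q) = a * ln (a / p) + a * ln (p / q).
Proof. by move=> a0 p0 q0; rewrite !ln_div ?posrE //; ring. Qed.

Lemma mixture m n (Phi : 'M[R]_(m,n)) (mu : 'rV[R]_m) (Q : 'rV[R]_n) :
  (forall i j, 0 < Phi i j) -> (forall j, 0 < (mu *m Phi) ord0 j) ->
  (forall j, 0 < Q ord0 j) ->
  \sum_i mu ord0 i * KL (row i Phi) Q =
  \sum_i mu ord0 i * KL (row i Phi) (mu *m Phi) + KL (mu *m Phi) Q.
Proof.
move=> hP hPb hQ.
set Pb := mu *m Phi.
have e : forall i, KL (row i Phi) Q = KL (row i Phi) Pb +
           \sum_j Phi i j * ln (Pb ord0 j / Q ord0 j).
  move=> i; rewrite /KL -big_split /=; apply: eq_bigr => j _.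
  rewrite [row i Phi ord0 j]mxE; apply: lnsplit => //.
under eq_bigr do rewrite e mulrDr.
rewrite big_split /=; congr (_ + _).
rewrite /KL; under eq_bigr do rewrite mulr_sumr.
rewrite exchange_big /=; apply: eq_bigr => j _.
set L := ln _.
by rewrite /Pb mxE mulr_suml; apply: eq_bigr => i _; rewrite mulrA.
Qed.

End Aux2.
Set Implicit Arguments. Unset Strict Implicit.
Section Aux3.
Variable R : realType.

Lemma row_pos m n (Phi : 'M[R]_(m,n)) : (forall i, in_open_simplex (row i Phi)) ->
  forall i j, 0 < Phi i j.
Proof. by move=> h i j; have := (h i).1 j; rewrite mxE. Qed.

Lemma row_sum m n (Phi : 'M[R]_(m,n)) : (forall i, in_open_simplex (row i Phi)) ->
  forall i, \sum_j Phi i j = 1.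
Proof. by move=> h i; rewrite -(h i).2; apply: eq_bigr => j _; rewrite mxE. Qed.

Lemma mul_sum m n (Phi : 'M[R]_(m,n)) (l : 'rV[R]_m) :
  (forall i, in_open_simplex (row i Phi)) ->
  \sum_j (l *m Phi) ord0 j = \sum_i l ord0 i.
Proof.
move=> h; under eq_bigr do rewrite mxE.
rewrite exchange_big /=; apply: eq_bigr => i _.
by rewrite -mulr_sumr row_sum // mulr1.
Qed.

Lemma mul_pos m n (Phi : 'M[R]_(m,n)) (l : 'rV[R]_m) :
  (forall i, in_open_simplex (row i Phi)) -> in_closed_simplex l ->
  forall j, 0 < (l *m Phi) ord0 j.
Proof.
move=> h [hl hs] j; have hP := row_pos h.
rewrite mxE lt_def sumr_ge0 ?andbT; last by move=> i _; rewrite mulr_ge0 // ltW.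
apply/eqP => h0.
have hnn : forall i, true -> 0 <= l ord0 i * Phi i j by move=> i _; rewrite mulr_ge0 // ltW.
have h2 := psumr_eq0P hnn h0.
have : \sum_i l ord0 i = 0.
  apply: big1 => i _; have := h2 i isT; move/eqP; rewrite mulf_eq0 (gt_eqF (hP i j)) orbF.
  by move/eqP.
by rewrite hs => /eqP; rewrite oner_eq0.
Qed.

Lemma le1 n (A : 'rV[R]_n) : in_open_simplex A -> forall j, A ord0 j <= 1.
Proof.
move=> [hA hs] j; rewrite -hs (bigD1 j) //= lerDl sumr_ge0 // => k _; exact: ltW.
Qed.

Lemma FO m n (Phi : 'M[R]_(m,n)) (A : pred 'I_m) (Q' Q : 'rV[R]_n) (i0 : 'I_m) :
  (forall j, 0 < Q' ord0 j) -> (forall i, in_open_simplex (row i Phi)) ->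
  is_Iproj Phi A Q' Q -> A i0 ->
  \sum_j (Phi i0 j - Q ord0 j) * ln (Q ord0 j / Q' ord0 j) = 0.
Proof.
move=> hQ' hrow [[[hQ hsQ] [c [hc eQ]]] hmin] Ai0.
set S := \sum_j _.
set M := \sum_j (Phi i0 j - Q ord0 j) ^+ 2 / Q ord0 j.
have hP : forall j, 0 < Phi i0 j by move=> j; apply: row_pos.
have hsP : \sum_j Phi i0 j = 1 by apply: row_sum.
have M0 : 0 <= M by apply: sumr_ge0 => j _; rewrite divr_ge0 ?sqr_ge0 // ltW.
have eQj : forall j, Q ord0 j = \sum_(i | A i) c i * Phi i j.
  by move=> j; rewrite eQ summxE; apply: eq_bigr => i _; rewrite !mxE.
have sdelta : forall (F : 'I_m -> R), \sum_(i | A i) (i == i0)%:R * F i = F i0.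
  move=> F; rewrite (bigD1 i0) //= eqxx mul1r big1 ?addr0 //.
  by move=> i /andP[_ /negbTE ->]; rewrite mul0r.
have key : forall t, (forall j, 0 < Q ord0 j + t * (Phi i0 j - Q ord0 j)) ->
    0 <= t * S + t ^+ 2 * M.
  move=> t ht.
  pose Qt : 'rV[R]_n := \row_j (Q ord0 j + t * (Phi i0 j - Q ord0 j)).
  have hQt : forall j, Qt ord0 j = Q ord0 j + t * (Phi i0 j - Q ord0 j).
    by move=> j; rewrite mxE.
  have aff : affL Phi A Qt.
    split; first split.
    - by move=> j; rewrite hQt.
    - under eq_bigr do rewrite hQt.
      by rewrite big_split /= -mulr_sumr sumrB hsQ hsP subrr mulr0 addr0.
    exists (fun i => (1 - t) * c i + t * (i == i0)%:R); split.
      rewrite big_split /= -!mulr_sumr hc.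
      have -> : \sum_(i | A i) ((i == i0)%:R : R) = 1.
        by rewrite (bigD1 i0) //= eqxx big1 ?addr0 // => i /andP[_ /negbTE ->].
      by rewrite !mulr1 subrK.
    apply/rowP => j; rewrite hQt summxE.
    under eq_bigr do rewrite !mxE mulrDl.
    rewrite big_split /=.
    under [X in _ = X + _]eq_bigr do rewrite -mulrA.
    under [X in _ = _ + X]eq_bigr do rewrite -mulrA (mulrC t) -mulrA.
    rewrite -mulr_sumr -eQj sdelta; ring.
  have h1 := hmin Qt aff.
  have h2 : KL Qt Q' <= KL Q Q' + t * S + t ^+ 2 * M + t * \sum_j (Phi i0 j - Q ord0 j).
    rewrite /KL /S /M !mulr_sumr -!big_split /=.
    apply: ler_sum => j _; rewrite hQt.
    set b := Q ord0 j; set v := Phi i0 j - b.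
    have hb : 0 < b := hQ j.
    have ha := ht j; rewrite -/b -/v in ha.
    have h := @T2 _ _ _ ha hb.
    rewrite (@lnsplit _ _ b) //.
    have e1 : (b + t * v - b) ^+ 2 / b = t ^+ 2 * (v ^+ 2 / b) by ring.
    have e2 : (b + t * v) * ln (b / Q' ord0 j) =
       b * ln (b / Q' ord0 j) + t * (v * ln (b / Q' ord0 j)) by ring.
    rewrite e1 in h; rewrite e2; lra.
  move: h2; rewrite sumrB hsP hsQ subrr mulr0 addr0; lra.
have hP1 : forall j, Phi i0 j <= 1.
  by move=> j; have := le1 (hrow i0) j; rewrite mxE.
pose q := \prod_j Q ord0 j.
have hq0 : 0 < q by apply: prodr_gt0 => j _.
have hQ1 := le1 (conj hQ hsQ).
have hqj : forall j, q <= Q ord0 j.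
  move=> j; rewrite /q (bigD1 j) //= ler_piMr ?(ltW (hQ j)) //.
  by apply: prodr_ile1 => k _; rewrite (ltW (hQ k)) hQ1.
have hq1 : q <= 1 by apply: prodr_ile1 => k _; rewrite (ltW (hQ k)) hQ1.
case: (ltrgtP S 0) => hS //.
- pose e := - S / (- S + M + 1).
  have d0 : 0 < - S + M + 1 by lra.
  have e0 : 0 < e by rewrite divr_gt0 // oppr_gt0.
  have e1 : e < 1 by rewrite ltr_pdivrMr // mul1r; lra.
  have eM : e * M < - S.
    have hh : 0 < - S * (- S + 1) by rewrite mulr_gt0 //; lra.
    by rewrite mulrAC ltr_pdivrMr //; lra.
  have : 0 <= e * S + e ^+ 2 * M.
    apply: key => j; have := hQ j; have := hP j => p0 q0.
    have := mulr_gt0 e0 p0; have : 0 < (1 - e) * Q ord0 j by rewrite mulr_gt0 // subr_gt0.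
    lra.
  nra.
- pose e := q * S / (2 * (S + M + 1)).
  have d0 : 0 < 2 * (S + M + 1) by lra.
  have e0 : 0 < e by rewrite divr_gt0 // mulr_gt0.
  have eq : e < q.
    have hh : 0 < q * (S + 2 * M + 2) by rewrite mulr_gt0 //; lra.
    by rewrite ltr_pdivrMr //; lra.
  have eM : e * M < S.
    have hh : q * M <= M by rewrite ler_piMl.
    have hh2 : S * (q * M) <= S * M by rewrite ler_wpM2l // ltW.
    have hh3 : 0 < S * (2 * S + M + 2) by rewrite mulr_gt0 //; lra.
    by rewrite mulrAC ltr_pdivrMr //; lra.
  have : 0 <= (- e) * S + (- e) ^+ 2 * M.
    apply: key => j; have := hQ j; have := hP j; have := hqj j; have := hP1 j => p1 qj p0 q0.
    have : e * Phi i0 j <= e by rewrite ler_piMr // ltW.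
    have := mulr_gt0 e0 q0.
    lra.
  nra.
Qed.

Lemma Pyth m n (Phi : 'M[R]_(m,n)) (A : pred 'I_m) (Q' Q : 'rV[R]_n) (i0 : 'I_m) :
  (forall j, 0 < Q' ord0 j) -> (forall i, in_open_simplex (row i Phi)) ->
  is_Iproj Phi A Q' Q -> A i0 ->
  KL (row i0 Phi) Q' = KL (row i0 Phi) Q + KL Q Q'.
Proof.
move=> hQ' hrow hI Ai0; have h := FO hQ' hrow hI Ai0.
have hQ := hI.1.1.1; have hP := row_pos hrow.
transitivity (\sum_j (Phi i0 j * ln (Phi i0 j / Q ord0 j) +
   (Q ord0 j * ln (Q ord0 j / Q' ord0 j) +
    (Phi i0 j - Q ord0 j) * ln (Q ord0 j / Q' ord0 j)))).
  rewrite /KL; apply: eq_bigr => j _; rewrite mxE (@lnsplit _ _ (Q ord0 j)) //; ring.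
rewrite big_split big_split /= h addr0 /KL; congr (_ + _).
by apply: eq_bigr => j _; rewrite mxE.
Qed.

Lemma sum_supp m (mu : 'rV[R]_m) (X : 'I_m -> R) (c : R) :
  \sum_i mu ord0 i = 1 -> (forall i, mu ord0 i != 0 -> X i = c) ->
  \sum_i mu ord0 i * X i = c.
Proof.
move=> hs hX; transitivity (\sum_i mu ord0 i * c).
  apply: eq_bigr => i _; case: (eqVneq (mu ord0 i) 0) => [->|/hX ->]; by rewrite ?mul0r.
by rewrite -mulr_suml hs mul1r.
Qed.
End Aux3.
Unset Implicit Arguments.
Theorem theorem13 (R : realType) (m n : nat) (Phi : 'M[R]_(m, n))
  (Q : 'I_m.-1 -> 'rV[R]_n) (lam : 'I_m.-1 -> 'rV[R]_m) (K : 'I_m.-1) :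
  (2 <= m)%N ->
  (forall i : 'I_m, in_open_simplex (row i Phi)) ->
  general_position Phi ->
  (forall k : 'I_m.-1, val k = 0%N -> is_equidistant Phi (Q k)) ->
  (forall (k k' : 'I_m.-1), val k = (val k').+1 ->
      is_Iproj Phi (fun i : 'I_m => (val k <= val i)%N) (Q k') (Q k)) ->
  (forall k : 'I_m.-1, is_barycentric Phi (Q k) (lam k)) ->
  (forall k : 'I_m.-1, (val k < val K)%N ->
      forall i : 'I_m,
        ((val i < val k)%N -> lam k ord0 i = 0) /\
        (val i = val k -> lam k ord0 i < 0) /\
        ((val k < val i)%N -> 0 < lam k ord0 i)) ->
  (if val K == 0%N then forall i : 'I_m, 0 <= lam K ord0 i
   else forall i : 'I_m,
        ((val i < val K)%N -> lam K ord0 i = 0) /\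
        ((val K <= val i)%N -> 0 < lam K ord0 i)) ->
  let CK := KL (row (widen_ord (leq_pred m) K) Phi) (Q K) in
  [/\ (forall l : 'rV[R]_m, in_closed_simplex l -> mutual_info l Phi <= CK),
      (exists2 l : 'rV[R]_m, in_closed_simplex l & mutual_info l Phi = CK)
    & (forall l : 'rV[R]_m, in_closed_simplex l -> mutual_info l Phi = CK ->
         l *m Phi = Q K)].
Proof.
move=> hm hrow _ hEq hIp hBar hlow hK CK.
have hP := row_pos hrow.
have pk : forall k : 'I_m.-1, val k != 0%N -> exists k' : 'I_m.-1, val k = (val k').+1.
  move=> k k0; exists (Ordinal (leq_ltn_trans (leq_pred k) (ltn_ord k))) => /=.
  by rewrite prednK // lt0n.
have hQpos : forall k, in_open_simplex (Q k).
  move=> k; case: (eqVneq (val k) 0%N) => [/hEq [[]]|/pk [k' /hIp [[]]]] //.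
have Equi : forall s (k : 'I_m.-1), val k = s -> forall i i' : 'I_m,
    (val k <= i)%N -> (val k <= i')%N -> KL (row i Phi) (Q k) = KL (row i' Phi) (Q k).
  elim=> [|s IH] k ek i i' hi hi'; first by apply: (hEq k ek).2.
  have [k' ek'] : exists k' : 'I_m.-1, val k = (val k').+1 by apply: pk; rewrite ek.
  have hI := hIp k k' ek'.
  have hQ' := (hQpos k').1.
  have p1 := Pyth hQ' hrow hI hi; have p2 := Pyth hQ' hrow hI hi'.
  have e : KL (row i Phi) (Q k') = KL (row i' Phi) (Q k').
    apply: (IH k'); first by move: ek; rewrite ek' => -[].
      by apply: leq_trans hi; rewrite ek'.
    by apply: leq_trans hi'; rewrite ek'.
  move: p1 p2; rewrite e => ->; lra.
set iK := widen_ord (leq_pred m) K.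
have EquiK : forall (k : 'I_m.-1) (i i' : 'I_m),
    (val k <= i)%N -> (val k <= i')%N -> KL (row i Phi) (Q k) = KL (row i' Phi) (Q k).
  by move=> k; apply: (Equi _ k erefl).
have hEK : forall i : 'I_m, (val K <= i)%N -> KL (row i Phi) (Q K) = CK.
  by move=> i hi; apply: EquiK.
have hKsupp : forall i : 'I_m, lam K ord0 i != 0 -> (val K <= i)%N.
  move=> i; move: hK; case: eqP => [-> _|_ hK] //; rewrite leqNgt.
  by apply: contra => /(hK i).1 ->.
have hQK := hQpos K.
have [hsK eQK] := hBar K.
have hlK : in_closed_simplex (lam K).
  split=> // i; move: hK; case: eqP => _ hK; first exact: hK.
  case: (ltnP i K) => hi; first by rewrite (hK i).1.
  exact: ltW ((hK i).2 hi).
have ALL : forall i : 'I_m, KL (row i Phi) (Q K) <= CK.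
  suff H : forall d (i : 'I_m), (val K - d <= i)%N -> KL (row i Phi) (Q K) <= CK.
    by move=> i; apply: (H K); rewrite subnn.
  elim=> [|d IH] i hi; first by rewrite hEK //; move: hi; rewrite subn0.
  case: (leqP (val K - d) i) => hid; first exact: IH.
  have hiK : (val i < val K)%N.
    by apply: (leq_trans hid); rewrite leq_subr.
  have IH' : forall i' : 'I_m, (val i < i')%N -> KL (row i' Phi) (Q K) <= CK.
    move=> i' hii'; apply: IH; move: hi hii' hid; rewrite /=; lia.
  have ikm : (val i < m.-1)%N by apply: ltn_trans hiK (ltn_ord K).
  pose k : 'I_m.-1 := Ordinal ikm.
  have ek : val k = val i by [].
  have hkK : (val k < val K)%N by [].
  have hl := hlow k hkK.
  have [hsk eQk] := hBar k.
  have hQk := hQpos k.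
  have hksupp : forall i' : 'I_m, lam k ord0 i' != 0 -> (val k <= i')%N.
    move=> i'; rewrite leqNgt; by apply: contra => /(hl i').1 ->.
  have hPbk : forall j, 0 < (lam k *m Phi) ord0 j by move=> j; rewrite -eQk; exact: hQk.1 j.
  have hPbK : forall j, 0 < (lam K *m Phi) ord0 j by move=> j; rewrite -eQK; exact: hQK.1 j.
  have mix1 := @mixture _ _ _ Phi (lam k) (Q K) hP hPbk hQK.1.
  rewrite -eQk in mix1.
  have c1 : \sum_i0 lam k ord0 i0 * KL (row i0 Phi) (Q k) = KL (row iK Phi) (Q k).
    apply: sum_supp => // i' /hksupp hi'; apply: EquiK => //.
    exact: ltnW.
  have mix2 := @mixture _ _ _ Phi (lam K) (Q k) hP hPbK hQk.1.
  rewrite -eQK in mix2.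
  have c2 : \sum_i0 lam K ord0 i0 * KL (row i0 Phi) (Q k) = KL (row iK Phi) (Q k).
    apply: sum_supp => // i' /hKsupp hi'; apply: EquiK => //=; apply: ltnW.
      exact: leq_trans hkK hi'.
    exact: hkK.
  have c3 : \sum_i0 lam K ord0 i0 * KL (row i0 Phi) (Q K) = CK.
    by apply: sum_supp => // i' /hKsupp hi'; apply: hEK.
  have sk1 : \sum_j Q k ord0 j = \sum_j Q K ord0 j by rewrite hQk.2 hQK.2.
  have g1 := @KL_ge0 _ _ _ _ hQk.1 hQK.1 sk1.
  have g2 := @KL_ge0 _ _ _ _ hQK.1 hQk.1 (esym sk1).
  rewrite c1 in mix1; rewrite c2 c3 in mix2.
  have s1 : \sum_i0 lam k ord0 i0 = lam k ord0 i + \sum_(i' | i' != i) lam k ord0 i'.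
    by rewrite (bigD1 i).
  have s2 : \sum_i0 lam k ord0 i0 * KL (row i0 Phi) (Q K) = lam k ord0 i * KL (row i Phi) (Q K)
       + \sum_(i' | i' != i) lam k ord0 i' * KL (row i' Phi) (Q K).
    by rewrite (bigD1 i).
  rewrite s1 in hsk; rewrite s2 in mix1.
  have hrest : \sum_(i' | i' != i) lam k ord0 i' * KL (row i' Phi) (Q K) <=
               \sum_(i' | i' != i) lam k ord0 i' * CK.
    apply: ler_sum => i' hi'.
    case: (ltngtP (val i') (val i)) => h.
    - by rewrite (hl i').1 // !mul0r.
    - by rewrite ler_wpM2l ?IH' // ltW // (hl i').2.2.
    - by move: hi'; rewrite (val_inj h) eqxx.
  rewrite -mulr_suml in hrest.
  have hneg : lam k ord0 i < 0 by apply: (hl i).2.1.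
  set Di := KL (row i Phi) (Q K) in mix1 *.
  set lki := lam k ord0 i in hsk hneg mix1.
  have : lki * (Di - CK) >= 0.
    have e1 : \sum_(i' | i' != i) lam k ord0 i' = 1 - lki by lra.
    rewrite e1 in hrest; lra.
  nra.
have mi : forall l : 'rV[R]_m,
    mutual_info l Phi = \sum_i l ord0 i * KL (row i Phi) (l *m Phi).
  move=> l; rewrite /mutual_info /KL /=; apply: eq_bigr => i _.
  by rewrite mulr_sumr; apply: eq_bigr => j _; rewrite !mxE mulrA.
have base : forall l : 'rV[R]_m, in_closed_simplex l ->
    mutual_info l Phi + KL (l *m Phi) (Q K) <= CK.
  move=> l hl; rewrite mi.
  have hPl := mul_pos hrow hl.
  rewrite -(@mixture _ _ _ Phi l (Q K) hP hPl hQK.1).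
  apply: le_trans (_ : \sum_i l ord0 i * CK <= _).
    by apply: ler_sum => i _; rewrite ler_wpM2l // hl.1.
  by rewrite -mulr_suml hl.2 mul1r.
have sl : forall l : 'rV[R]_m, in_closed_simplex l ->
   \sum_j (l *m Phi) ord0 j = \sum_j Q K ord0 j.
  by move=> l hl; rewrite mul_sum // hl.2 hQK.2.
split.
- move=> l hl; have := base l hl.
  have := @KL_ge0 _ _ _ _ (mul_pos hrow hl) hQK.1 (sl l hl); lra.
- exists (lam K) => //.
  rewrite mi -eQK.
  by apply: sum_supp => // i /hKsupp; apply: hEK.
- move=> l hl hI; have := base l hl; rewrite hI => h.
  have g := @KL_ge0 _ _ _ _ (mul_pos hrow hl) hQK.1 (sl l hl).
  apply: (@KL_eq0 _ _ _ _ (mul_pos hrow hl) hQK.1 (sl l hl)); lra.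
Qed.
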